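(* Let $q$ be an odd prime power, $n$ a positive integer with $n\mid(q-1)$, $\lambda\in\mathbb{F}_q^{*}$ with multiplicative order dividing $\frac{q-1}{n}$, and let $\alpha_1,\dots,\alpha_n\in\mathbb{F}_q^{*}$ be the (pairwise distinct) roots of $x^n-\lambda$, i.e. $x^n-\lambda=\prod_{i=1}^n(x-\alpha_i)$, in some fixed order. Let $\ell\ge0$, $\boldsymbol\eta=(\eta_0,\dots,\eta_\ell)\in\mathbb{F}_q^{\ell+1}\setminus\{\boldsymbol0\}$, let $r$ be an integer with $0\le r\le\ell$, and let $k=\frac{n-\ell-r}{2}$ be an integer with $k\ge2$. Let $\boldsymbol v=(v_1,\dots,v_n)$ with $v_i\in\{-1,1\}$ for $1\le i\le n-k+1$ and $v_i\in\mathbb{F}_q\setminus\{-1,0,1\}$ for $n-k+2\le i\le n$. Suppose $$1+\sum_{t=r}^{\ell}\eta_t\,\Phi_{\ell+1+r-t}\neq0,\qquad\text{where }\Phi_i=(-1)^{n-1}P\,\Omega_i\ (1\le i\le\ell+1).$$ Then the $( * )$-$(\mathcal{L},\mathcal{P})$-TGRS code $\mathcal{C}$ is an LCD code, i.e. $\mathcal{C}\cap\mathcal{C}^{\perp}=\{\boldsymbol0\}$.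
   Context: $P=\prod_{i=1}^n\alpha_i$. For an integer $t$, $S_t(x_1,\dots,x_n)$ is the complete homogeneous symmetric polynomial of degree $t$ ($S_t=0$ for $t<0$, $S_0=1$, and $S_t=\sum_{t_1+\dots+t_n=t,\,t_i\ge0}x_1^{t_1}\cdots x_n^{t_n}$ for $t\ge0$), and $\Omega_i=\sum_{t=0}^{\ell}\eta_tS_{t+1-i}(\alpha_1,\dots,\alpha_n)$. The $( * )$-$(\mathcal{L},\mathcal{P})$-TGRS code is $\mathcal{C}=\{(v_1f(\alpha_1),\dots,v_nf(\alpha_n)) : f\in\mathcal{F}_{n,k,\boldsymbol\eta}\}$, where $\mathcal{F}_{n,k,\boldsymbol\eta}=\{\sum_{i=0}^{k-1}f_ix^i+f_0\sum_{j=0}^{\ell}\eta_jx^{k+j} : f_i\in\mathbb{F}_q\}$. $\mathcal{C}^{\perp}$ is the dual with respect to the standard inner product $\sum_i x_iy_i$. *)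

(* Defs.v *)
From HB Require Import structures.
From mathcomp Require Import all_boot all_order all_algebra.
Set Implicit Arguments. Unset Strict Implicit. Unset Printing Implicit Defensive.
Import GRing.Theory.
Local Open Scope ring_scope.

(* Complete homogeneous symmetric polynomial of degree t, evaluated at
   a : 'I_n -> F :  sum over (t_1..t_n), t_i >= 0, sum t_i = t, of prod a_i^t_i.
   (Exponents t_i <= t are encoded in 'I_t.+1.) *)
Definition hcomplete (F : fieldType) (n t : nat) (a : 'I_n -> F) : F :=
  \sum_(m : {ffun 'I_n -> 'I_t.+1} | (\sum_i (m i : nat) == t)%N)
     \prod_i a i ^+ m i.

Definition Sym (F : fieldType) (n : nat) (a : 'I_n -> F) (t : int) : F :=
  match t with
  | Posz m => hcomplete m a
  | Negz _ => 0
  end.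

Definition Pprod (F : fieldType) (n : nat) (a : 'I_n -> F) : F := \prod_i a i.

Definition Omega (F : fieldType) (n l : nat) (a : 'I_n -> F)
  (eta : 'I_l.+1 -> F) (i : nat) : F :=
  \sum_(t < l.+1) eta t * Sym a ((t.+1)%:Z - i%:Z).

Definition Phi (F : fieldType) (n l : nat) (a : 'I_n -> F)
  (eta : 'I_l.+1 -> F) (i : nat) : F :=
  (-1) ^+ n.-1 * Pprod a * Omega a eta i.

Definition etapoly (F : fieldType) (k l : nat) (eta : 'I_l.+1 -> F) : {poly F} :=
  \sum_(j < l.+1) eta j *: 'X^(k + j).

Definition in_TGRS_polys (F : fieldType) (k l : nat) (eta : 'I_l.+1 -> F)
  (g : {poly F}) : Prop :=
  exists p : {poly F}, (size p <= k)%N /\ g = p + p`_0 *: etapoly k eta.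

Definition in_TGRS_code (F : fieldType) (n k l : nat) (a v : 'I_n -> F)
  (eta : 'I_l.+1 -> F) (c : 'rV[F]_n) : Prop :=
  exists g : {poly F}, in_TGRS_polys k eta g /\ c = \row_i (v i * g.[a i]).

Definition dotp (F : fieldType) (n : nat) (x y : 'rV[F]_n) : F :=
  \sum_i x ord0 i * y ord0 i.

Definition in_dual (F : fieldType) (n : nat) (C : 'rV[F]_n -> Prop)
  (x : 'rV[F]_n) : Prop :=
  forall y, C y -> dotp x y = 0.

Definition is_LCD (F : fieldType) (n : nat) (C : 'rV[F]_n -> Prop) : Prop :=
  forall x, C x -> in_dual C x -> x = 0.

(* Main.v *)
Require Import Defs.
From HB Require Import structures.
From mathcomp Require Import all_boot all_order all_algebra.
From mathcomp Require Import zify ring.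
Import GRing.Theory.
Local Open Scope ring_scope.
Set Implicit Arguments. Unset Strict Implicit. Unset Printing Implicit Defensive.

Lemma sum_delta (F : fieldType) (N c : nat) (G : nat -> F) :
  (c < N)%N -> \sum_(m < N) G m * ((m : nat) == c)%:R = G c.
Proof.
move=> Hc; rewrite (bigD1 (Ordinal Hc)) //= eqxx mulr1 big1 ?addr0 // => m Hm.
suff -> : (nat_of_ord m == c) = false by rewrite mulr0.
apply/negbTE; apply: contra Hm => /eqP Hm; apply/eqP; exact: val_inj.
Qed.

Lemma root_pow (F : fieldType) n (lam : F) (a : 'I_n -> F) :
  'X^n - lam%:P = \prod_(i < n) ('X - (a i)%:P) -> forall i, a i ^+ n = lam.
Proof.
move=> H i; have := congr1 (fun p => p.[a i]) H => /=.
rewrite horner_prod (bigD1 i) //= !hornerE subrr mul0r.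
by move/eqP; rewrite subr_eq0 => /eqP.
Qed.

Lemma P_eq (F : fieldType) n (lam : F) (a : 'I_n -> F) : (0 < n)%N ->
  'X^n - lam%:P = \prod_(i < n) ('X - (a i)%:P) ->
  (-1) ^+ n.-1 * \prod_i a i = lam.
Proof.
move=> Hn H; have := congr1 (fun p => p.[0]) H => /=.
rewrite horner_prod !hornerE expr0n /=.
have -> : (n == 0%N) = false by rewrite eqn0Ngt Hn.
under eq_bigr => i _ do rewrite !hornerE.
rewrite ?add0r prodrN card_ord => Heq.
have -> : ((-1) ^+ n.-1 = - (-1) ^+ n :> F).
  by rewrite -(prednK Hn) exprS mulN1r opprK.
by rewrite mulNr -Heq opprK.
Qed.

Lemma card_char0 (F : finFieldType) : #|F|%:R = 0 :> F.
Proof.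
have := @reindex_inj F +%R 0 F (fun x => 1 + x) xpredT id (addrI 1).
rewrite big_split /= => H.
have : \sum_(x : F) (1 : F) = 0.
  by apply: (@addIr _ (\sum_(x : F) x)); rewrite add0r {2}H.
by rewrite sumr_const.
Qed.


Lemma natn_neq0 (F : finFieldType) n : (n %| #|F|.-1)%N -> n%:R != 0 :> F.
Proof.
move=> Hd; apply/negP => /eqP Hn.
have Hq : (0 < #|F|)%N by apply/card_gt0P; exists 0.
have := card_char0 F; rewrite -(prednK Hq) -addn1 natrD -(divnK Hd) natrM Hn mulr0 add0r.
by move/eqP; rewrite oner_eq0.
Qed.

Lemma deriv_prod_seq (F : fieldType) (I : eqType) (s : seq I) (G : I -> {poly F}) :
  uniq s ->
  (\prod_(i <- s) G i)^`() = \sum_(i <- s) (G i)^`() * \prod_(j <- s | j != i) G j.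
Proof.
elim: s => [|x s IH] /=; first by rewrite !big_nil derivC.
case/andP=> Hx Hu; rewrite !big_cons derivM IH // eqxx /=.
congr (_ * _ + _).
  rewrite big_seq_cond [RHS]big_seq_cond; apply: eq_bigl => j.
  by case: (boolP (j \in s)) => //= Hj; apply/esym/negP => /eqP Hjx; rewrite -Hjx Hj in Hx.
rewrite mulr_sumr; apply: eq_big_seq => i Hi.
rewrite big_cons; have -> : (x != i) by apply/negP => /eqP Hxi; rewrite Hxi Hi in Hx.
by rewrite mulrCA.
Qed.

Lemma deriv_XsubC_prod (F : fieldType) n (a : 'I_n -> F) :
  (\prod_(i < n) ('X - (a i)%:P))^`() =
  \sum_(i < n) \prod_(j < n | j != i) ('X - (a j)%:P).
Proof.
rewrite deriv_prod_seq ?index_enum_uniq //; apply: eq_bigr => i _.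
by rewrite derivXsubC mul1r.
Qed.

Lemma sum_cofactors (F : fieldType) n (lam : F) (a : 'I_n -> F) :
  'X^n - lam%:P = \prod_(i < n) ('X - (a i)%:P) ->
  \sum_(i < n) \prod_(j < n | j != i) ('X - (a j)%:P) = ('X^(n.-1) : {poly F}) *+ n.
Proof.
move=> H; rewrite -deriv_XsubC_prod -H derivB derivC subr0 derivXn //.
Qed.

Lemma cofactor_eq (F : fieldType) n (lam : F) (a : 'I_n -> F) :
  'X^n - lam%:P = \prod_(i < n) ('X - (a i)%:P) -> forall i,
  \prod_(j < n | j != i) ('X - (a j)%:P) =
  \sum_(s < n) 'X^(n.-1 - s) * ((a i)%:P) ^+ s.
Proof.
move=> H i; apply: (@mulfI _ ('X - (a i)%:P)); first by rewrite polyXsubC_eq0.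
transitivity ('X^n - lam%:P); first by rewrite H [RHS](bigD1 i).
by rewrite -(root_pow H i) rmorphXn /= subrXX.
Qed.


Lemma power_sum_small (F : fieldType) n (lam : F) (a : 'I_n -> F) :
  'X^n - lam%:P = \prod_(i < n) ('X - (a i)%:P) -> forall s, (s < n)%N ->
  \sum_(i < n) a i ^+ s = (s == 0)%:R * n%:R.
Proof.
move=> H s Hs; have := congr1 (fun p : {poly F} => p`_(n.-1 - s)) (sum_cofactors H) => /=.
rewrite coef_sum coefMn coefXn.
have -> : (n.-1 - s == n.-1)%N = (s == 0)%N by apply/eqP/eqP; lia.
rewrite mulr_natr => <-; apply: eq_bigr => i _.
rewrite (cofactor_eq H) coef_sum.
under eq_bigr => s' _ do rewrite -rmorphXn mulrC coefCM coefXn.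
have Heq : forall s' : 'I_n, (n.-1 - s == n.-1 - s')%N = ((s' : nat) == s)%N.
  by move=> s'; apply/eqP/eqP; have := ltn_ord s'; lia.
under eq_bigr => s' _ do rewrite Heq.
by rewrite (sum_delta (fun m => a i ^+ m)).
Qed.

Lemma a_neq0 (F : fieldType) n (lam : F) (a : 'I_n -> F) :
  'X^n - lam%:P = \prod_(i < n) ('X - (a i)%:P) -> lam != 0 -> (0 < n)%N ->
  forall i, a i != 0.
Proof.
move=> H Hl Hn i; apply/negP => /eqP Hi; move: Hl.
by rewrite -(root_pow H i) Hi expr0n eqn0Ngt Hn eqxx.
Qed.

Lemma a_inj (F : fieldType) n (lam : F) (a : 'I_n -> F) :
  'X^n - lam%:P = \prod_(i < n) ('X - (a i)%:P) -> lam != 0 -> (0 < n)%N ->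
  n%:R != 0 :> F -> injective a.
Proof.
move=> H Hl Hn Hnr x y Hxy; apply/eqP; apply/negPn/negP => Hne.
have := congr1 (fun p : {poly F} => p.[a x]) (sum_cofactors H) => /=.
rewrite horner_sum hornerMn hornerXn big1.
  move/esym/eqP; rewrite -mulr_natl mulf_eq0 (negbTE Hnr) /= expf_eq0.
  by rewrite (negbTE (a_neq0 H Hl Hn x)) andbF.
move=> i _; rewrite horner_prod.
case: (boolP (i == x)) => Hix.
  have Hyi : y != i by rewrite (eqP Hix) eq_sym.
  by rewrite (bigD1 y) //= !hornerE Hxy subrr mul0r.
have Hxi : x != i by rewrite eq_sym.
by rewrite (bigD1 x) //= !hornerE subrr mul0r.
Qed.

Lemma power_sum (F : fieldType) n (lam : F) (a : 'I_n -> F) :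
  'X^n - lam%:P = \prod_(i < n) ('X - (a i)%:P) -> (0 < n)%N ->
  forall m, (m < n + n)%N ->
  \sum_(i < n) a i ^+ m = n%:R * ((m == 0)%:R + lam * (m == n)%:R).
Proof.
move=> H Hn m Hm; case: (ltnP m n) => Hmn.
  rewrite (power_sum_small H Hmn) (_ : (m == n) = false); last first.
    by apply/negbTE; rewrite neq_ltn Hmn.
  by rewrite mulr0 addr0 mulrC.
have -> : (m == 0)%N = false by apply/negbTE; rewrite -lt0n; exact: leq_trans Hmn.
have E : forall i, a i ^+ m = a i ^+ (m - n) * lam.
  by move=> i; rewrite -(root_pow H i) -exprD subnK.
under eq_bigr => i _ do rewrite E.
rewrite -mulr_suml (power_sum_small H); last by lia.
have -> : (m - n == 0)%N = (m == n) by apply/eqP/eqP; lia.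
by rewrite (_ : (false%:R : F) = 0) // add0r; ring.
Qed.

Lemma sum_horner (F : fieldType) n (lam : F) (a : 'I_n -> F) :
  'X^n - lam%:P = \prod_(i < n) ('X - (a i)%:P) -> (0 < n)%N ->
  forall h : {poly F}, (size h <= n + n)%N ->
  \sum_(i < n) h.[a i] = n%:R * (h`_0 + lam * h`_n).
Proof.
move=> H Hn h Hh.
under eq_bigr => i _ do rewrite (horner_coef_wide _ Hh).
rewrite exchange_big /=.
under eq_bigr => m _ do rewrite -mulr_sumr (power_sum H Hn (ltn_ord m)).
rewrite (eq_bigr (fun m : 'I_(n + n) => n%:R * (h`_m * ((m : nat) == 0)%:R) +
   (n%:R * lam) * (h`_m * ((m : nat) == n)%:R))); last by move=> m _; ring.
rewrite big_split /= -!mulr_sumr.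
rewrite (sum_delta (fun m => h`_m)); last lia.
rewrite (sum_delta (fun m => h`_m)); last lia.
by ring.
Qed.


Lemma coefGp (F : fieldType) n t (a : 'I_n -> F) m :
  (\prod_(i < n) \sum_(j < t.+1) 'X^(t - j) * ((a i)%:P) ^+ j)`_m =
  \sum_(f : {ffun 'I_n -> 'I_t.+1}) (\prod_i a i ^+ f i) *
      (m == \sum_i (t - f i))%N%:R.
Proof.
rewrite bigA_distr_bigA coef_sum; apply: eq_bigr => f _.
rewrite big_split /= prodrXr.
rewrite (eq_bigr (fun i => (a i ^+ f i)%:P)); last by move=> i _; rewrite rmorphXn.
by rewrite -rmorph_prod mulrC coefCM coefXn.
Qed.

Lemma coef_prod_Xd (F : fieldType) (I : Type) (s : seq I) (c : I -> F) d m :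
  ~~ (d %| m)%N -> (\prod_(i <- s) ('X^d - (c i)%:P))`_m = 0.
Proof.
move: m; apply: (big_ind (fun p : {poly F} => forall m, ~~ (d %| m)%N -> p`_m = 0)).
- by move=> m Hm; rewrite coef1; case: eqP Hm => // ->; rewrite dvdn0.
- move=> p q Hp Hq m Hm; rewrite coefM big1 // => j _.
  case: (boolP (d %| j)%N) => Hj; last by rewrite Hp ?mul0r.
  rewrite Hq ?mulr0 //; apply: contra Hm => Hmj.
  by rewrite -(subnKC (leq_ord j)) dvdn_add.
- move=> i _ m Hm; rewrite coefB coefXn coefC.
  case: eqP Hm => [->|_]; first by rewrite dvdnn.
  by case: eqP => [->|_]; rewrite ?dvdn0 // subrr.
Qed.

Lemma sum_split_t n t (f : {ffun 'I_n -> 'I_t.+1}) :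
  (\sum_i (t - f i) + \sum_i (f i : nat) = n * t)%N.
Proof.
rewrite -big_split /=.
rewrite (eq_bigr (fun _ => t)); last by move=> i _; rewrite subnK // -ltnS.
by rewrite sum_nat_const card_ord.
Qed.

Lemma hcomplete_roots (F : fieldType) n (lam : F) (a : 'I_n -> F) :
  'X^n - lam%:P = \prod_(i < n) ('X - (a i)%:P) -> (0 < n)%N ->
  forall t, (t < n)%N -> hcomplete t a = (t == 0)%N%:R.
Proof.
move=> H Hn t Ht; case: t Ht => [|t] Ht.
  rewrite /hcomplete (eq_bigl xpredT); last first.
    by move=> m; apply/eqP; apply: big1 => i _; case: (m i) => [[|]].
  rewrite (eq_bigr (fun _ => 1)); last first.
    by move=> m _; apply: big1 => i _; case: (m i) => [[|]].
  by rewrite sumr_const card_ffun !card_ord exp1n.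
set T := t.+1.
pose Gp := \prod_(i < n) \sum_(j < T.+1) 'X^(T - j) * ((a i)%:P) ^+ j.
have HG : Gp * ('X^n - lam%:P) = \prod_(i < n) ('X^(T.+1) - ((a i) ^+ T.+1)%:P).
  rewrite H -big_split /=; apply: eq_bigr => i _.
  by rewrite rmorphXn subrXX mulrC.
set K := (n * T - T)%N.
have Hc := congr1 (fun p : {poly F} => p`_(K + n)) HG; move: Hc => /=.
rewrite coef_prod_Xd; last first.
  have -> : (K + n = n.-1 * T.+1 + 1)%N.
    rewrite /K -(prednK Hn); move: (n.-1) => n'; nia.
  by rewrite dvdn_addr ?dvdn_mull // dvdn1.
rewrite mulrBr coefB coefMXn coefMC.
rewrite (_ : (K + n < n)%N = false); last by apply/negbTE; rewrite -leqNgt leq_addl.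
rewrite addnK.
have -> : Gp`_(K + n) = 0.
  rewrite /Gp coefGp big1 // => f _.
  have Hs := sum_split_t f; rewrite (_ : (K + n == _) = false) ?mulr0 //.
  apply/negbTE/negP => /eqP Hk; rewrite /K in Hk.
  have : (T <= n * T)%N by rewrite leq_pmull.
  nia.
rewrite mul0r subr0 /Gp coefGp.
move=> Hz; transitivity (0 : F); last by [].
rewrite /hcomplete big_mkcond -[in RHS]Hz /=.
apply: eq_bigr => f _.
have := sum_split_t f => Hs.
have HT : (T <= n * T)%N by rewrite leq_pmull.
rewrite /K; move: (n * T)%N Hs HT => N Hs HT.
move: (\sum_(i < n) (T - f i))%N (\sum_(i < n) (f i : nat))%N Hs => S1 S2 Hs.
case: ifP => Hf.
  by rewrite (_ : (N - T == S1)%N = true) ?mulr1 //; apply/eqP; move/eqP: Hf; lia.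
rewrite (_ : (N - T == S1)%N = false) ?mulr0 //; apply/negbTE/negP => /eqP Hk.
by move/negbT: Hf => /eqP; apply; lia.
Qed.


Lemma sum_delta_ord (F : fieldType) N (G : 'I_N.+1 -> F) c :
  (c < N.+1)%N -> \sum_(m < N.+1) G m * ((m : nat) == c)%:R = G (inord c).
Proof.
move=> Hc; rewrite (bigD1 (inord c)) //= inordK // eqxx mulr1 big1 ?addr0 // => m Hm.
suff -> : (nat_of_ord m == c) = false by rewrite mulr0.
apply/negbTE; apply: contra Hm => /eqP Hm; apply/eqP; apply: val_inj; by rewrite /= inordK.
Qed.

Lemma Sym_val (F : fieldType) n (lam : F) (a : 'I_n -> F) :
  'X^n - lam%:P = \prod_(i < n) ('X - (a i)%:P) -> (0 < n)%N ->
  forall t s, (t < n)%N -> (0 < s)%N -> Sym a ((t.+1)%:Z - s%:Z) = (t.+1 == s)%N%:R.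
Proof.
move=> H Hn t s Ht Hs0; case: (leqP s t.+1) => Hs.
  rewrite subzn //; change (hcomplete (t.+1 - s) a = (t.+1 == s)%N%:R).
  rewrite (hcomplete_roots H Hn); last by lia.
  by rewrite (_ : (t.+1 - s == 0)%N = (t.+1 == s)) //; apply/eqP/eqP; lia.
have -> : ((t.+1)%:Z - s%:Z = Negz (s - t.+2))%R.
  by rewrite NegzE -subSn // subSS -(subzn (ltnW Hs)) opprB.

by rewrite /= (_ : (t.+1 == s) = false) //; apply/negbTE; rewrite neq_ltn Hs.
Qed.

Lemma Omega_val (F : fieldType) n (lam : F) (a : 'I_n -> F) l (eta : 'I_l.+1 -> F) :
  'X^n - lam%:P = \prod_(i < n) ('X - (a i)%:P) -> (0 < n)%N -> (l < n)%N ->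
  forall s, (1 <= s <= l.+1)%N -> Omega a eta s = eta (inord s.-1).
Proof.
move=> H Hn Hl s Hs; rewrite /Omega.
rewrite (eq_bigr (fun t : 'I_l.+1 => eta t * ((t : nat) == s.-1)%:R)); last first.
  move=> t _; rewrite (Sym_val H Hn); [|by have := ltn_ord t; lia|by lia].
  by rewrite (_ : (t.+1 == s) = ((t : nat) == s.-1)) //; apply/eqP/eqP; lia.
by rewrite sum_delta_ord //; lia.
Qed.

Lemma Phi_val (F : fieldType) n (lam : F) (a : 'I_n -> F) l (eta : 'I_l.+1 -> F) r :
  'X^n - lam%:P = \prod_(i < n) ('X - (a i)%:P) -> (0 < n)%N -> (l < n)%N ->
  forall t : 'I_l.+1, (r <= t)%N ->
  Phi a eta (l.+1 + r - t) = lam * eta (inord (l + r - t)).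
Proof.
move=> H Hn Hl t Hr; rewrite /Phi /Pprod (P_eq Hn H) (Omega_val eta H Hn Hl).
  by rewrite (_ : ((l.+1 + r - t).-1 = l + r - t)%N) //; have := ltn_ord t; lia.
by have := ltn_ord t; lia.
Qed.

Lemma dot_expand (F : fieldType) n (a v : 'I_n -> F) (f g : {poly F}) :
  dotp (\row_i (v i * f.[a i])) (\row_i (v i * g.[a i])) =
  \sum_i (v i * v i) * (f * g).[a i].
Proof. by rewrite /dotp; apply: eq_bigr => i _; rewrite !mxE hornerM; ring. Qed.


Unset Implicit Arguments.

Theorem theorem4p4 (F : finFieldType) (n : nat) (lam : F)
  (alpha : 'I_n -> F) (l r k : nat) (eta : 'I_l.+1 -> F) (v : 'I_n -> F) :
  odd #|F| ->
  (0 < n)%N ->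
  (n %| #|F|.-1)%N ->
  lam != 0 ->
  lam ^+ (#|F|.-1 %/ n) = 1 ->
  'X^n - lam%:P = \prod_(i < n) ('X - (alpha i)%:P) ->
  (exists j, eta j != 0) ->
  (r <= l)%N ->
  n = (l + r + 2 * k)%N ->
  (2 <= k)%N ->
  (forall i : 'I_n, (i < n - k + 1)%N -> v i = 1 \/ v i = -1) ->
  (forall i : 'I_n, (n - k + 1 <= i)%N ->
       [/\ v i != -1, v i != 0 & v i != 1]) ->
  1 + \sum_(t < l.+1 | (r <= t)%N) eta t * Phi alpha eta (l.+1 + r - t)%N != 0 ->
  is_LCD (in_TGRS_code k alpha v eta).
Proof.
case: n alpha v => [|n] a v; first by move=> _; rewrite ltnn.
move=> _ Hn Hdiv Hl _ H _ Hrl Hnk Hk Hv1 Hv2 Hcond.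
have Hnr := natn_neq0 Hdiv.
have Hinj := a_inj H Hl Hn Hnr.
have Ha0 := a_neq0 H Hl Hn.
have Hln : (l < n.+1)%N by lia.
set E := etapoly k eta.
have coefE : forall m, E`_m = \sum_(j < l.+1) eta j * (m == k + j)%N%:R.
  by move=> m; rewrite /E /etapoly coef_sum; apply: eq_bigr => j _; rewrite coefZ coefXn.
have E_out : forall m, ((m < k) || (k + l < m))%N -> E`_m = 0.
  move=> m Hm; rewrite coefE big1 // => j _.
  rewrite (_ : (m == k + j)%N = false) ?mulr0 //; apply/negbTE.
  by have := ltn_ord j; move: Hm; lia.
have sizeE : (size E <= k + l + 1)%N.
  by apply/leq_sizeP => j Hj; apply: E_out; lia.
have Hcond' : 1 + lam * \sum_(t < l.+1 | (r <= t)%N) eta t * eta (inord (l + r - t)) != 0.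
  rewrite mulr_sumr; move: Hcond; rewrite (eq_bigr (fun t : 'I_l.+1 => lam * (eta t * eta (inord (l + r - t))))) //.
  by move=> t Ht; rewrite (Phi_val eta H Hn Hln Ht); ring.
have Hw1 : forall i : 'I_n.+1, (i < n.+1 - k + 1)%N -> v i * v i = 1.
  by move=> i Hi; case: (Hv1 i Hi) => ->; rewrite ?mulr1 ?mulrNN ?mulr1.
have Hw2 : forall i : 'I_n.+1, (n.+1 - k + 1 <= i)%N -> v i * v i - 1 != 0.
  move=> i Hi; case: (Hv2 i Hi) => Hm1 _ Hp1.
  rewrite (_ : v i * v i - 1 = (v i - 1) * (v i + 1)); last by ring.
  by rewrite mulf_neq0 // ?subr_eq0 // addr_eq0.
move=> x [gg [[p [Hp ->]] ->]] Hdual.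
set f := p + p`_0 *: E.
have Hpc : forall j, (k <= j)%N -> p`_j = 0 by apply/leq_sizeP.
have sizef : (size f <= k + l + 1)%N.
  apply/leq_sizeP => j Hj; rewrite /f coefD coefZ E_out; last by lia.
  by rewrite mulr0 addr0 Hpc //; lia.
have Hdot : forall g, in_TGRS_polys k eta g ->
    \sum_i (v i * v i) * (f * g).[a i] = 0.
  by move=> g Hg; rewrite -dot_expand; apply: Hdual; exists g; split.
have Hsplit : forall h : {poly F}, \sum_i (v i * v i) * h.[a i] =
    \sum_i h.[a i] + \sum_i (v i * v i - 1) * h.[a i].
  by move=> h; rewrite -big_split; apply: eq_bigr => i _ /=; ring.
have HA : forall i0 : 'I_n.+1, (n.+1 - k + 1 <= i0)%N -> f.[a i0] = 0.
  move=> i0 Hi0.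
  set s := rem (i0 : nat) (iota (n.+1 - k + 1) (k - 1)).
  have Hmem : (i0 : nat) \in iota (n.+1 - k + 1) (k - 1).
    by rewrite mem_iota; have := ltn_ord i0; lia.
  have Hs : forall j, (j \in s) = ((j != i0) && (n.+1 - k + 1 <= j < n.+1))%N.
    move=> j; rewrite /s (mem_rem_uniq _ (iota_uniq _ _)) inE mem_iota.
    by rewrite (_ : (n.+1 - k + 1 + (k - 1) = n.+1)%N) //; lia.
  set g := 'X * \prod_(j <- s) ('X - (a (inord j))%:P).
  have sizeg : (size g <= k)%N.
    apply: leq_trans (size_polyMleq _ _) _.
    rewrite size_polyX size_prod_XsubC /s size_rem // size_iota; lia.
  have g0 : g`_0 = 0 by rewrite /g coef0M coefX mul0r.
  have Hg : in_TGRS_polys k eta g by exists g; split => //; rewrite g0 scale0r addr0.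
  have sizefg : (size (f * g)%R <= n.+1)%N.
    apply: leq_trans (size_polyMleq _ _) _; move: sizef sizeg Hnk Hk; move: (size f) (size g) => sf sg; lia.
  have := Hdot g Hg; rewrite Hsplit.
  rewrite (sum_horner H Hn); last by lia.
  rewrite coef0M g0 mulr0 add0r.
  rewrite (_ : (f * g)`_n.+1 = 0); last by move/leq_sizeP: sizefg; apply.
  rewrite mulr0 mulr0 add0r.
  rewrite (bigD1 i0) //= big1 ?addr0; last first.
    move=> i Hi; case: (ltnP i (n.+1 - k + 1)) => Hik.
      by rewrite Hw1 // subrr mul0r.
    rewrite hornerM /g hornerM horner_prod (big_rem (i : nat)) /=; last first.
      by rewrite Hs; apply/andP; split; [exact: Hi | rewrite Hik ltn_ord].
    by rewrite !hornerE inord_val subrr /= mulr0 mul0r.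
  have gnz : g.[a i0] != 0.
    rewrite /g hornerM hornerX horner_prod mulf_neq0 // prodf_seq_neq0.
    apply/allP => j Hj /=.
    rewrite !hornerE subr_eq0; apply/negP => /eqP Heq.
    move: Hj; rewrite Hs => /andP [Hj1 /andP [_ Hj2]].
    have Hij := Hinj _ _ Heq.
    by move: Hj1; rewrite Hij inordK // eqxx.
  move/eqP; rewrite hornerM !mulf_eq0 (negbTE (Hw2 i0 Hi0)) (negbTE gnz) /= orbF.
  by move/eqP.
have E0 : E`_0 = 0 by apply: E_out; lia.
have EE : (E * E)`_n.+1 =
    \sum_(t < l.+1 | (r <= t)%N) eta t * eta (inord (l + r - t)).
  rewrite {1}/E /etapoly mulr_suml coef_sum [RHS]big_mkcond.
  apply: eq_bigr => t _ /=.
  rewrite /E /etapoly mulr_sumr coef_sum.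
  rewrite (eq_bigr (fun j : 'I_l.+1 =>
      (eta t * eta j) * ((n.+1 == k + t + (k + j))%N)%:R)); last first.
    by move=> j _; rewrite -scalerAl -scalerAr !coefZ -exprD coefXn; ring.
  case: ifP => Hrt.
    have Heq : forall j : 'I_l.+1,
        (n.+1 == k + t + (k + j))%N = ((j : nat) == l + r - t)%N.
      by move=> j; apply/eqP/eqP; have := ltn_ord t; have := ltn_ord j; lia.
    under eq_bigr => j _ do rewrite Heq.
    by rewrite (sum_delta_ord (fun j => eta t * eta j)) //; have := ltn_ord t; lia.
  rewrite big1 // => j _; rewrite (_ : (n.+1 == k + t + (k + j))%N = false) ?mulr0 //.
  by apply/negbTE/negP => /eqP; have := ltn_ord j; move/negbT: Hrt; lia.
have Hp0 : p`_0 = 0.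
  set g := 1 + E.
  have Hg : in_TGRS_polys k eta g.
    by exists 1; split; [rewrite size_poly1; lia | rewrite coefC eqxx scale1r].
  have sizeg : (size g <= k + l + 1)%N.
    apply/leq_sizeP => j Hj; rewrite /g coefD coefC E_out; last by lia.
    by rewrite (_ : (j == 0)%N = false) ?addr0 //; apply/negbTE; lia.
  have := Hdot g Hg.
  rewrite (eq_bigr (fun i => (f * g).[a i])); last first.
    move=> i _; case: (ltnP i (n.+1 - k + 1)) => Hik; first by rewrite Hw1 // mul1r.
    by rewrite hornerM HA // !mul0r mulr0.
  rewrite (sum_horner H Hn); last first.
    apply: leq_trans (size_polyMleq _ _) _; move: sizef sizeg Hnk Hk.
    by move: (size f) (size g) => sf sg; lia.
  rewrite coef0M /f /g coefD coefZ coefD coefC E0 eqxx mulr0 addr0 addr0 mulr1.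
  have -> : (p + p`_0 *: E) * (1 + E) =
      p + p * E + (p`_0)%:P * E + (p`_0)%:P * (E * E).
    by rewrite -mul_polyC; ring.
  rewrite !coefD !coefCM EE (Hpc n.+1); last by lia.
  rewrite E_out; last by lia.
  rewrite (_ : (p * E)`_n.+1 = 0); last first.
    rewrite coefM big1 // => j _; case: (ltnP j k) => Hj.
      by rewrite E_out ?mulr0 //; have := ltn_ord j; lia.
    by rewrite Hpc ?mul0r.
  move=> Heq.
  have : n.+1%:R * p`_0 * (1 + lam * \sum_(t < l.+1 | (r <= t)%N) eta t * eta (inord (l + r - t))) = 0.
    by rewrite -[in RHS]Heq; ring.
  by move/eqP; rewrite !mulf_eq0 (negbTE Hnr) (negbTE Hcond') /= orbF => /eqP.
have Hf : f = p by rewrite /f Hp0 scale0r addr0.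
have Hpz : p = 0.
  apply/eqP; apply/negPn/negP => Hpn.
  pose rs := 0 :: [seq a (inord j) | j <- iota (n.+1 - k + 1) (k - 1)].
  have Hr : all (root p) rs.
    rewrite /= rootE horner_coef0 Hp0 eqxx /=; apply/allP => y /mapP [j Hj ->].
    have Hj' : (n.+1 - k + 1 <= j < n.+1)%N by move: Hj; rewrite mem_iota; lia.
    by rewrite rootE -Hf HA ?eqxx // inordK //; lia.
  have Hu : uniq rs.
    rewrite /= map_inj_in_uniq ?iota_uniq ?andbT.
      by apply/mapP => [[j _ Hj]]; move: (Ha0 (inord j)); rewrite -Hj eqxx.
    move=> j1 j2 Hj1 Hj2 /Hinj Heq.
    move: Hj1 Hj2; rewrite !mem_iota => Hj1 Hj2.
    have := congr1 val Heq; rewrite /= !inordK //; lia.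
  have := max_poly_roots Hpn Hr Hu; rewrite /= size_map size_iota.
  by move: Hp Hk; move: (size p) => sp; lia.
apply/rowP => i; rewrite !mxE -/f Hf Hpz horner0 mulr0.
by [].
Qed.
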